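(* There exist two non-isomorphic simple graphs $G_1$ and $G_2$, each on $8$ vertices, such that $P(G_1;x,\lambda)=P(G_2;x,\lambda)$. Consequently, the bivariate permanent polynomial is not a graph characterising polynomial.
   Context: All graphs are finite, simple and undirected. For a graph $G$ on $n$ vertices, let $A$ be its adjacency matrix and $\bar A$ the adjacency matrix of its complement $\bar G$, both with respect to the same vertex ordering. The permanent of an $n\times n$ matrix $M=(m_{ij})$ is $\mathrm{per}(M)=\sum_{\sigma\in S_n}\prod_{i=1}^n m_{i\sigma(i)}$. The bivariate permanent polynomial of $G$ is $P(G;x,\lambda)=\mathrm{per}(xI_n+\lambda A+\bar A)\in\mathbb{Z}[x,\lambda]$, where $I_n$ is the $n\times n$ identity matrix. A graph polynomial is called graph characterising if any two graphs with the same polynomial are isomorphic. *)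

(* Defs.v *)
From HB Require Import structures.
From mathcomp Require Import all_boot all_order all_algebra all_fingroup.
Set Implicit Arguments. Unset Strict Implicit. Unset Printing Implicit Defensive.
Import GRing.Theory.
Local Open Scope ring_scope.

Definition simple_graph (n : nat) (e : rel 'I_n) : Prop :=
  (forall i, e i i = false) /\ (forall i j, e i j = e j i).

Definition isomorphic (n : nat) (e1 e2 : rel 'I_n) : Prop :=
  exists f : {perm 'I_n}, forall i j, e2 (f i) (f j) = e1 i j.

(* Bivariate polynomials Z[x, lambda] as {poly {poly int}}:
   x is the outer variable, lambda the inner variable. *)
Definition bipoly := {poly {poly int}}.
Definition varx : bipoly := 'X.
Definition varl : bipoly := ('X)%:P.

Definition per (R : comNzRingType) (n : nat) (M : 'M[R]_n) : R :=
  \sum_(s : 'S_n) \prod_(i < n) M i (s i).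

Definition adjmx (R : nzRingType) (n : nat) (e : rel 'I_n) : 'M[R]_n :=
  \matrix_(i, j) (e i j)%:R.
Definition coadjmx (R : nzRingType) (n : nat) (e : rel 'I_n) : 'M[R]_n :=
  \matrix_(i, j) ((i != j) && ~~ e i j)%:R.

Definition perpoly (n : nat) (e : rel 'I_n) : bipoly :=
  per (varx%:M + varl *: adjmx bipoly e + coadjmx bipoly e).

(* Main.v *)
Require Import Defs.
From mathcomp Require Import all_boot all_order all_algebra all_fingroup.
Set Implicit Arguments. Unset Strict Implicit. Unset Printing Implicit Defensive.
Import GRing.Theory.
Local Open Scope ring_scope.

Definition G1 : seq (nat * nat) :=
  [:: (0,1);(0,5);(1,2);(1,4);(1,7);(2,3);(2,4);(2,5);(2,6);(3,6);(4,6);(4,7);(5,6);(6,7)].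
Definition G2 : seq (nat * nat) :=
  [:: (0,1);(0,4);(0,6);(1,2);(1,3);(1,4);(1,5);(2,7);(3,4);(3,5);(3,6);(4,6);(4,7);(6,7)].
Definition ebk (g : seq (nat * nat)) (i j : nat) : bool := ((i, j) \in g) || ((j, i) \in g).
Definition er (g : seq (nat * nat)) : rel 'I_8 := fun i j => ebk g i j.

Lemma entry (n : nat) (e : rel 'I_n) (irr : forall i, e i i = false) (i j : 'I_n) :
  (varx%:M + varl *: adjmx bipoly e + coadjmx bipoly e) i j
  = varx ^+ (i == j) * varl ^+ (e i j).
Proof.
rewrite !mxE; case: (eqVneq i j) => [->|ne]; rewrite ?irr /=.
  by rewrite mulr0 !addr0 expr0 mulr1 expr1.
rewrite mulr0n add0r expr0 mul1r.
by case: (e i j); rewrite /= ?mulr1 ?mulr0 ?addr0 ?add0r ?expr1 ?expr0.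
Qed.

Lemma perpoly_sum (n : nat) (e : rel 'I_n) (irr : forall i, e i i = false) :
  perpoly e = \sum_(s : 'S_n) varx ^+ (\sum_i (i == s i : nat))%N
                                * varl ^+ (\sum_i (e i (s i) : nat))%N.
Proof.
rewrite /perpoly /per; apply: eq_bigr => s _.
rewrite -!prodrXr -big_split /=; apply: eq_bigr => i _; exact: entry.
Qed.


Definition h (s : 'S_8) : seq nat := [seq val (s i) | i <- enum 'I_8].
Definition fl (t : seq nat) : nat := sumn [seq (k == nth 0 t k : nat) | k <- iota 0 8].
Definition gl g (t : seq nat) : nat := sumn [seq (ebk g k (nth 0 t k) : nat) | k <- iota 0 8].
Definition code g t : nat := (fl t * 9 + gl g t)%N.
Definition H (c : nat) : bipoly := varx ^+ (c %/ 9) * varl ^+ (c %% 9).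
Definition P8 := permutations (iota 0 8).

Lemma sum_ord8 (F : nat -> nat) : (\sum_(i < 8) F i)%N = sumn [seq F k | k <- iota 0 8].
Proof. by rewrite sumnE big_map -(big_mkord xpredT F). Qed.

Lemma nth_h s (i : 'I_8) : nth 0 (h s) i = s i.
Proof. by rewrite /h (nth_map i) ?nth_ord_enum // size_enum_ord. Qed.

Lemma sumn_bool (b : nat -> bool) (s : seq nat) : (sumn [seq (b k : nat) | k <- s] <= size s)%N.
Proof. by elim: s => //= a s IH; rewrite -add1n leq_add ?leq_b1. Qed.

Lemma h_inj : injective h.
Proof. by move=> s1 s2 E; apply/permP => i; apply: val_inj; rewrite /= -!nth_h E. Qed.

Lemma h_in s : h s \in P8.
Proof.
rewrite mem_permutations; apply: uniq_perm; rewrite ?iota_uniq //.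
  by rewrite map_inj_uniq ?enum_uniq // => i j /val_inj; apply: perm_inj.
move=> k; rewrite mem_iota /=; apply/mapP/idP => [[i _ ->]|kl]; first by rewrite ltn_ord.
by exists (s^-1 (Ordinal kl))%g; rewrite ?mem_enum ?permKV.
Qed.

Lemma hP : perm_eq (map h (index_enum (perm_of 'I_8))) P8.
Proof.
have U : uniq (map h (index_enum (perm_of 'I_8))).
  rewrite (map_inj_uniq h_inj); exact: index_enum_uniq.
have S : {subset map h (index_enum (perm_of 'I_8)) <= P8}.
  by move=> t /mapP [s _ ->]; apply: h_in.
have Z : (size P8 <= size (map h (index_enum (perm_of 'I_8))))%N.
  rewrite /P8 size_map (size_permutations (iota_uniq 0 8)) size_iota -card_Sn cardT enumT.
  rewrite [index_enum _]unlock; exact: leqnn.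
case: (uniq_min_size U S Z) => _ Hi.
exact: (uniq_perm U (permutations_uniq _) Hi).
Qed.

Lemma perpoly_list g (irr : forall i, er g i i = false) :
  perpoly (er g) = \sum_(t <- P8) H (code g t).
Proof.
rewrite (perpoly_sum irr) -(perm_big _ hP) big_map.
apply: eq_bigr => s _.
have E1 : (\sum_i (i == s i : nat))%N = fl (h s).
  rewrite /fl -sum_ord8; apply: eq_bigr => i _; by rewrite nth_h.
have E2 : (\sum_i (er g i (s i) : nat))%N = gl g (h s).
  rewrite /gl -sum_ord8; apply: eq_bigr => i _; by rewrite nth_h.
have L : (gl g (h s) < 9)%N.
  by apply: (leq_ltn_trans (sumn_bool _ _)); rewrite size_iota.
by rewrite /H /code E1 E2 divnMDl // modnMDl divn_small ?addn0 ?modn_small.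
Qed.

Lemma codeP : perm_eq (map (code G1) P8) (map (code G2) P8).
Proof.
apply/(perm_sortP leq_total leq_trans anti_leq); apply/eqP.
vm_compute; reflexivity.
Qed.

Definition deg (e : rel 'I_8) (i : 'I_8) : nat := (\sum_(j < 8) (e i j : nat))%N.
Definition degl g (k : nat) : nat := sumn [seq (ebk g k j : nat) | j <- iota 0 8].

Lemma degE g i : deg (er g) i = degl g i.
Proof. exact: (sum_ord8 (fun k => ebk g i k)). Qed.

Lemma deg_iso (e1 e2 : rel 'I_8) (f : {perm 'I_8})
  (Hf : forall i j, e2 (f i) (f j) = e1 i j) i : deg e2 (f i) = deg e1 i.
Proof.
rewrite /deg (reindex_inj (@perm_inj _ f)) /=.
by apply: eq_bigr => j _; rewrite Hf.
Qed.

Lemma bf : all (fun a => all (fun b => all (fun c =>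
  ~~ [&& degl G2 a == 2%N, degl G2 b == 5%N, degl G2 c == 5%N, b != c,
         ebk G2 a b & ebk G2 a c]) (iota 0 8)) (iota 0 8)) (iota 0 8).
Proof. vm_compute; reflexivity. Qed.

Lemma irr_ok g : all (fun i => ~~ ebk g i i) (iota 0 8) -> forall i, er g i i = false.
Proof.
move=> /allP H i; apply/negbTE; apply: H.
by rewrite mem_iota /= ltn_ord.
Qed.

Lemma in8 (i : 'I_8) : (val i \in iota 0 8).
Proof. by rewrite mem_iota /= ltn_ord. Qed.

Theorem mainTheorem1 :
  exists e1 e2 : rel 'I_8,
    [/\ simple_graph e1, simple_graph e2, ~ isomorphic e1 e2
      & perpoly e1 = perpoly e2].
Proof.
have i1 : forall i, er G1 i i = false by apply: irr_ok; vm_compute; reflexivity.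
have i2 : forall i, er G2 i i = false by apply: irr_ok; vm_compute; reflexivity.
exists (er G1), (er G2); split.
- by split=> // i j; rewrite /er /ebk orbC.
- by split=> // i j; rewrite /er /ebk orbC.
- move=> [f Hf].
  pose o2 := @Ordinal 8 2 isT; pose o3 := @Ordinal 8 3 isT; pose o6 := @Ordinal 8 6 isT.
  have d3 : degl G2 (f o3) = 2%N by rewrite -degE (deg_iso Hf) degE; vm_compute.
  have d2 : degl G2 (f o2) = 5%N by rewrite -degE (deg_iso Hf) degE; vm_compute.
  have d6 : degl G2 (f o6) = 5%N by rewrite -degE (deg_iso Hf) degE; vm_compute.
  have ne : val (f o2) != val (f o6) by rewrite val_eqE (inj_eq perm_inj).
  have a2 : ebk G2 (f o3) (f o2) by have := Hf o3 o2; rewrite /er => ->; vm_compute.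
  have a6 : ebk G2 (f o3) (f o6) by have := Hf o3 o6; rewrite /er => ->; vm_compute.
  move: bf => /allP /(_ _ (in8 (f o3))) /allP /(_ _ (in8 (f o2))) /allP /(_ _ (in8 (f o6))).
  by rewrite d3 d2 d6 ne a2 a6.
- rewrite !perpoly_list //.
  rewrite -(big_map (code G1) xpredT H) -(big_map (code G2) xpredT H).
  exact: perm_big codeP.
Qed.
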